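(* Consider the setting in the context: the exact solution $(\phi,p)$ of the periodic crime chemotaxis system with the stated regularity, and numerical solutions $(\phi_h^m,p_h^m)$ produced by the SPIMEX scheme (so in particular $p_h^m\ge0$ pointwise). Let $\tilde C>0$ be such that $\|\nabla_hp^0\|_{L^\infty}\le\tilde C$, and let $$B=\max_{0\le m\le T/\tau}\{\|\phi_h(t_m)\|_{L^\infty}+\|p_h(t_m)\|_{L^\infty}+\|(\nabla p)_h(t_m)\|_{L^\infty}\}.$$ Let $m\ge0$ be an index with $\|\phi_h^m\|_{L^\infty}+\|p_h^m\|_{L^\infty}+\|\nabla_hp_h^m\|_{L^\infty}\le B+1$, and define $$T_1^m=\nabla_h\cdot\Big(\frac{\phi_h(t_m)}{p_h(t_m)+p^0}\nabla_h(p_h(t_m)+p^0)-\frac{\phi_h^m}{p_h^m+p^0}\nabla_h(p_h^m+p^0)\Big).$$ Then for every $f_h\in X$, $$|\langle T_1^m,f_h\rangle|\le C_{B,m_p,\tilde C}\big(\|e_\phi^m\|_{L^2}+\|e_p^m\|_{H^1}\big)\|\nabla_hf_h\|_{L^2},$$ where $e_\phi^m=\phi_h(t_m)-\phi_h^m$, $e_p^m=p_h(t_m)-p_h^m$, and $C_{B,m_p,\tilde C}$ is a constant depending only on $B$, $m_p$ and $\tilde C$.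
   Context: PDE: $D,\eta>0$, $T>0$; $p^0$ smooth $\Omega$-periodic with $0<m_p\le p^0\le M_p$; $(\phi,p)$, $\phi,p\ge0$, solves periodically on $\Omega\times[0,T]$: $\partial_t\phi=\frac D4\nabla\cdot(\nabla\phi-\frac{2\phi}{p+p^0}\nabla(p+p^0))-(p+p^0)\phi$, $\partial_tp=\eta D\Delta p+(p+p^0)\phi-p$, with $\phi\in C^3([0,T];C^4_{per}(\Omega))$, $p\in C^3([0,T];C^5_{per}(\Omega))$ ($C^m_{per}$: $C^m$ with periodic derivatives up to order $m$). Grid and operators: $\Omega$ a square of side $L$, $h=L/N$, $X$ the periodic grid functions; $u_h(t)$ is the grid restriction of $u(\cdot,t)$ (also for $p^0$); $(D_xu)_{i+1/2,j}=(u_{i+1,j}-u_{i,j})/h$, $D_y$ analogous; $(d_xf)_{i,j}=(f_{i+1/2,j}-f_{i-1/2,j})/h$, $d_y$ analogous; $\nabla_h=(D_x,D_y)$, $\nabla_h\cdot(f^x,f^y)=d_xf^x+d_yf^y$, $\Delta_h=\nabla_h\cdot\nabla_h$; $\nabla_h\cdot(w\nabla_hv)=d_x(\bar wD_xv)+d_y(\bar wD_yv)$ with $\bar w$ the face-centred average of $w$. $\langle u,v\rangle=h^2\sum_{i,j=1}^Nu_{i,j}v_{i,j}$, $\|u\|_{L^2}^2=\langle u,u\rangle$, $\|u\|_{H^1}^2=\|u\|_{L^2}^2+\|\nabla_hu\|_{L^2}^2$, $\|u\|_{L^\infty}=\max|u_{i,j}|$. SPIMEX scheme: $\tau>0$,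 $t_k=k\tau$, $\phi_h^0=\phi_h(0)$, $p_h^0=p_h(0)$; predictor for $k\ge1$: $\frac{\tilde\phi_h^{k+1}-\phi_h^k}{\tau}=\frac D8\Delta_h(\tilde\phi_h^{k+1}+\phi_h^k)-\frac{3D}4\nabla_h\cdot(\frac{\phi_h^k}{p_h^k+p^0}\nabla_h(p_h^k+p^0))+\frac D4\nabla_h\cdot(\frac{\phi_h^{k-1}}{p_h^{k-1}+p^0}\nabla_h(p_h^{k-1}+p^0))-\frac32(p_h^k+p^0)\phi_h^k+\frac12(p_h^{k-1}+p^0)\phi_h^{k-1}$, $\frac{\tilde p_h^{k+1}-p_h^k}{\tau}=\frac{\eta D}2\Delta_h(\tilde p_h^{k+1}+p_h^k)+\frac32[(p_h^k+p^0)\phi_h^k-p_h^k]-\frac12[(p_h^{k-1}+p^0)\phi_h^{k-1}-p_h^{k-1}]$; for $k=0$: $\frac{\tilde\phi_h^1-\phi_h^0}{\tau}=\frac D8\Delta_h(\tilde\phi_h^1+\phi_h^0)-\frac D2\nabla_h\cdot(\frac{\phi_h^0}{p_h^0+p^0}\nabla_h(p_h^0+p^0))-(p_h^0+p^0)\phi_h^0$, $\frac{\tilde p_h^1-p_h^0}{\tau}=\frac{\eta D}2\Delta_h(\tilde p_h^1+p_h^0)+(p_h^0+p^0)\phi_h^0-p_h^0$. Corrector: $(\phi_h^{k+1},p_h^{k+1})$ minimizes $\frac12(\|\phi-\tilde\phi_h^{k+1}\|_{L^2}^2+\|p-\tilde p_h^{k+1}\|_{H^1}^2)$ over $X\times X$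 subject to $\phi\ge0$, $p\ge0$ pointwise. *)

(* Defs.v *)
From Stdlib Require Export Reals Lra Lia.
From Coquelicot Require Export Coquelicot.
Open Scope R_scope.

(* Periodic grid functions on an N x N grid: values at indices i,j < N are
   the meaningful ones; shifts are taken modulo N. Index i corresponds to
   the grid point x_i = i*h (h = L/N), i = 0..N-1. *)
Definition gf := nat -> nat -> R.

Fixpoint sumN (n : nat) (f : nat -> R) : R :=
  match n with O => 0 | S k => sumN k f + f k end.

(* max of f 0, ..., f (n-1) (and 0); used only for nonnegative quantities *)
Fixpoint maxN (n : nat) (f : nat -> R) : R :=
  match n with O => 0 | S k => Rmax (maxN k f) (f k) end.

Definition nxt (N i : nat) : nat := (S i) mod N.
Definition prv (N i : nat) : nat := (i + N - 1) mod N.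

(* forward differences: value at the face (i+1/2, j) stored at index (i,j) *)
Definition Dx (N : nat) (h : R) (u : gf) : gf :=
  fun i j => (u (nxt N i) j - u i j) / h.
Definition Dy (N : nat) (h : R) (u : gf) : gf :=
  fun i j => (u i (nxt N j) - u i j) / h.
(* backward differences of face-valued functions, giving cell-centred values *)
Definition dx (N : nat) (h : R) (f : gf) : gf :=
  fun i j => (f i j - f (prv N i) j) / h.
Definition dy (N : nat) (h : R) (f : gf) : gf :=
  fun i j => (f i j - f i (prv N j)) / h.
Definition avgx (N : nat) (w : gf) : gf := fun i j => (w i j + w (nxt N i) j) / 2.
Definition avgy (N : nat) (w : gf) : gf := fun i j => (w i j + w i (nxt N j)) / 2.

Definition divh (N : nat) (h : R) (Fx Fy : gf) : gf :=
  fun i j => dx N h Fx i j + dy N h Fy i j.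
Definition lap (N : nat) (h : R) (u : gf) : gf := divh N h (Dx N h u) (Dy N h u).
Definition fluxx (N : nat) (h : R) (w v : gf) : gf := fun i j => avgx N w i j * Dx N h v i j.
Definition fluxy (N : nat) (h : R) (w v : gf) : gf := fun i j => avgy N w i j * Dy N h v i j.
Definition divwgrad (N : nat) (h : R) (w v : gf) : gf :=
  divh N h (fluxx N h w v) (fluxy N h w v).

Definition inner (N : nat) (h : R) (u v : gf) : R :=
  h ^ 2 * sumN N (fun i => sumN N (fun j => u i j * v i j)).
Definition nL2 (N : nat) (h : R) (u : gf) : R := sqrt (inner N h u u).
Definition ngradL2 (N : nat) (h : R) (u : gf) : R :=
  sqrt (inner N h (Dx N h u) (Dx N h u) + inner N h (Dy N h u) (Dy N h u)).
Definition nH1 (N : nat) (h : R) (u : gf) : R :=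
  sqrt (inner N h u u + inner N h (Dx N h u) (Dx N h u) + inner N h (Dy N h u) (Dy N h u)).
Definition nLinf (N : nat) (u : gf) : R :=
  maxN N (fun i => maxN N (fun j => Rabs (u i j))).
Definition ngradLinf (N : nat) (h : R) (u : gf) : R :=
  Rmax (nLinf N (Dx N h u)) (nLinf N (Dy N h u)).

Definition gsub (u v : gf) : gf := fun i j => u i j - v i j.
Definition gadd (u v : gf) : gf := fun i j => u i j + v i j.

Definition restr (h : R) (u : R -> R -> R) : gf :=
  fun i j => u (INR i * h) (INR j * h).

Definition gradLinf_cont (N : nat) (h : R) (u : R -> R -> R) : R :=
  maxN N (fun i => maxN N (fun j =>
    sqrt ((Derive (fun x => u x (INR j * h)) (INR i * h)) ^ 2 +
          (Derive (fun y => u (INR i * h) y) (INR j * h)) ^ 2))).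

Definition periodic2 (L : R) (u : R -> R -> R) : Prop :=
  forall x y, u (x + L) y = u x y /\ u x (y + L) = u x y.

Definition p0_ok (L mp Mp : R) (p0 : R -> R -> R) : Prop :=
  0 < mp /\ periodic2 L p0 /\ (forall x y, mp <= p0 x y <= Mp) /\
  (forall x y, ex_derive (fun s => p0 s y) x /\ ex_derive (fun s => p0 x s) y).

Definition crime_solution (D eta T L : R) (p0 : R -> R -> R)
  (phi p : R -> R -> R -> R) : Prop :=
  let q := fun x y t => p x y t + p0 x y in
  let Fx := fun x y t => Derive (fun s => phi s y t) x
              - 2 * phi x y t / q x y t * Derive (fun s => q s y t) x in
  let Fy := fun x y t => Derive (fun s => phi x s t) y
              - 2 * phi x y t / q x y t * Derive (fun s => q x s t) y in
  (forall t, periodic2 L (fun x y => phi x y t) /\ periodic2 L (fun x y => p x y t)) /\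
  (forall x y t, 0 <= t <= T -> 0 <= phi x y t /\ 0 <= p x y t) /\
  (forall x y t, 0 < t < T ->
     ex_derive (fun s => phi x y s) t /\ ex_derive (fun s => p x y s) t /\
     ex_derive (fun s => Fx s y t) x /\ ex_derive (fun s => Fy x s t) y /\
     ex_derive (fun s => Derive (fun r => p r y t) s) x /\
     ex_derive (fun s => Derive (fun r => p x r t) s) y /\
     Derive (fun s => phi x y s) t =
       D / 4 * (Derive (fun s => Fx s y t) x + Derive (fun s => Fy x s t) y)
       - q x y t * phi x y t /\
     Derive (fun s => p x y s) t =
       eta * D * (Derive (fun s => Derive (fun r => p r y t) s) x
                  + Derive (fun s => Derive (fun r => p x r t) s) y)
       + q x y t * phi x y t - p x y t).

Definition on_grid (N : nat) (P : nat -> nat -> Prop) : Prop :=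
  forall i j, (i < N)%nat -> (j < N)%nat -> P i j.

Definition spimex (N : nat) (h D eta tau : R) (p0h phi_init p_init : gf)
  (phin pn : nat -> gf) : Prop :=
  let q := fun k => gadd (pn k) p0h in
  let chem := fun k => divwgrad N h (fun i j => phin k i j / q k i j) (q k) in
  let reac := fun k i j => q k i j * phin k i j in
  let J := fun (phit pt a b : gf) =>
     / 2 * (nL2 N h (gsub a phit) ^ 2 + nH1 N h (gsub b pt) ^ 2) in
  on_grid N (fun i j => phin O i j = phi_init i j /\ pn O i j = p_init i j) /\
  forall k : nat, exists phit pt : gf,
    (match k with
     | O => on_grid N (fun i j =>
         (phit i j - phin O i j) / tau =
           D / 8 * lap N h (gadd phit (phin O)) i j - D / 2 * chem O i j - reac O i j /\
         (pt i j - pn O i j) / tau =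
           eta * D / 2 * lap N h (gadd pt (pn O)) i j + reac O i j - pn O i j)
     | S k' => on_grid N (fun i j =>
         (phit i j - phin k i j) / tau =
           D / 8 * lap N h (gadd phit (phin k)) i j
           - 3 * D / 4 * chem k i j + D / 4 * chem k' i j
           - 3 / 2 * reac k i j + 1 / 2 * reac k' i j /\
         (pt i j - pn k i j) / tau =
           eta * D / 2 * lap N h (gadd pt (pn k)) i j
           + 3 / 2 * (reac k i j - pn k i j) - 1 / 2 * (reac k' i j - pn k' i j))
     end) /\
    on_grid N (fun i j => 0 <= phin (S k) i j /\ 0 <= pn (S k) i j) /\
    (forall a b : gf, on_grid N (fun i j => 0 <= a i j /\ 0 <= b i j) ->
       J phit pt (phin (S k)) (pn (S k)) <= J phit pt a b).

Definition Bconst (N : nat) (h T tau : R) (phi p : R -> R -> R -> R) : R :=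
  maxN (S (Z.to_nat (Int_part (T / tau)))) (fun m =>
    let t := INR m * tau in
    nLinf N (restr h (fun x y => phi x y t)) + nLinf N (restr h (fun x y => p x y t))
    + gradLinf_cont N h (fun x y => p x y t)).

Definition T1 (N : nat) (h : R) (p0h phie pe phinm pnm : gf) : gf :=
  let qe := gadd pe p0h in
  let qn := gadd pnm p0h in
  let we := fun i j => phie i j / qe i j in
  let wn := fun i j => phinm i j / qn i j in
  divh N h (gsub (fluxx N h we qe) (fluxx N h wn qn))
           (gsub (fluxy N h we qe) (fluxy N h wn qn)).

(* Main.v *)
Require Import Defs.

Lemma sumN_ext n f g : (forall k, (k < n)%nat -> f k = g k) -> sumN n f = sumN n g.
Proof. induction n; intros H; simpl; auto. rewrite IHn by (intros; apply H; lia). rewrite H by lia. auto. Qed.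
Lemma sumN_add n f g : sumN n (fun k => f k + g k) = sumN n f + sumN n g.
Proof. induction n; simpl; [lra|]. rewrite IHn. lra. Qed.
Lemma sumN_scal n c f : sumN n (fun k => c * f k) = c * sumN n f.
Proof. induction n; simpl; [lra|]. rewrite IHn. lra. Qed.
Lemma sumN_le n f g : (forall k, (k < n)%nat -> f k <= g k) -> sumN n f <= sumN n g.
Proof. induction n; intros H; simpl; [lra|]. assert (sumN n f <= sumN n g) by (apply IHn; intros; apply H; lia). assert (f n <= g n) by (apply H; lia). lra. Qed.
Lemma sumN_shift n f : sumN (S n) f = f O + sumN n (fun k => f (S k)).
Proof. induction n; simpl in *; [lra|]. rewrite IHn. lra. Qed.

Lemma nxt_lt N i : (1 <= N)%nat -> (nxt N i < N)%nat.
Proof. intros. unfold nxt. apply Nat.mod_upper_bound. lia. Qed.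
Lemma prv_lt N i : (1 <= N)%nat -> (prv N i < N)%nat.
Proof. intros. unfold prv. apply Nat.mod_upper_bound. lia. Qed.

Lemma sumN_nxt N f : (1 <= N)%nat -> sumN N (fun i => f (nxt N i)) = sumN N f.
Proof.
  intros HN. destruct N as [|n]; [lia|].
  rewrite (sumN_shift n f). change (sumN n (fun i => f (nxt (S n) i)) + f (nxt (S n) n) = f 0%nat + sumN n (fun k => f (S k))).
  rewrite (sumN_ext n (fun i => f (nxt (S n) i)) (fun k => f (S k))).
  - unfold nxt. rewrite Nat.Div0.mod_same. lra.
  - intros k Hk. unfold nxt. rewrite Nat.mod_small by lia. auto.
Qed.

Lemma prv_nxt N i : (i < N)%nat -> prv N (nxt N i) = i.
Proof.
  intros Hi. destruct N as [|n]; [lia|]. unfold prv, nxt.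
  destruct (Nat.eq_dec i n) as [->|Hne].
  - rewrite Nat.Div0.mod_same. rewrite Nat.mod_small; lia.
  - rewrite (Nat.mod_small (S i)) by lia.
    replace (S i + S n - 1)%nat with (i + 1 * S n)%nat by lia.
    rewrite Nat.Div0.mod_add. apply Nat.mod_small; lia.
Qed.

Definition S2 (N : nat) (u : gf) : R := sumN N (fun i => sumN N (fun j => u i j)).

Lemma S2_ext N u v : (forall i j, (i < N)%nat -> (j < N)%nat -> u i j = v i j) -> S2 N u = S2 N v.
Proof. intros H. unfold S2. apply sumN_ext; intros. apply sumN_ext; intros. auto. Qed.
Lemma S2_add N u v : S2 N (fun i j => u i j + v i j) = S2 N u + S2 N v.
Proof. unfold S2. rewrite <- sumN_add. apply sumN_ext; intros. apply sumN_add. Qed.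
Lemma S2_scal N c u : S2 N (fun i j => c * u i j) = c * S2 N u.
Proof. unfold S2. rewrite <- sumN_scal. apply sumN_ext; intros. apply sumN_scal. Qed.
Lemma S2_le N u v : (forall i j, (i < N)%nat -> (j < N)%nat -> u i j <= v i j) -> S2 N u <= S2 N v.
Proof. intros H. unfold S2. apply sumN_le; intros. apply sumN_le; intros. auto. Qed.

Lemma S2_nxt_x N u : (1 <= N)%nat -> S2 N (fun i j => u (nxt N i) j) = S2 N u.
Proof. intros HN. unfold S2. apply (sumN_nxt N (fun i => sumN N (fun j => u i j))). auto. Qed.
Lemma S2_nxt_y N u : (1 <= N)%nat -> S2 N (fun i j => u i (nxt N j)) = S2 N u.
Proof. intros HN. unfold S2. apply sumN_ext; intros. apply (sumN_nxt N (fun j => u k j)). auto. Qed.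

Lemma sbp_x N h F f : (1 <= N)%nat ->
  S2 N (fun i j => dx N h F i j * f i j) = - S2 N (fun i j => F i j * Dx N h f i j).
Proof.
  intros HN.
  rewrite (S2_ext N _ (fun i j => / h * (F i j * f i j) + (- / h) * (F (prv N i) j * f i j)))
    by (intros; unfold dx, Rdiv; ring).
  rewrite (S2_ext N (fun i j => F i j * Dx N h f i j) (fun i j => / h * (F i j * f (nxt N i) j) + (- / h) * (F i j * f i j)))
    by (intros; unfold Dx, Rdiv; ring).
  rewrite !S2_add, !S2_scal.
  rewrite <- (S2_nxt_x N (fun i j => F (prv N i) j * f i j)) by auto.
  rewrite (S2_ext N (fun i j => F (prv N (nxt N i)) j * f (nxt N i) j) (fun i j => F i j * f (nxt N i) j))
    by (intros; rewrite prv_nxt; auto).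
  ring.
Qed.

Lemma sbp_y N h F f : (1 <= N)%nat ->
  S2 N (fun i j => dy N h F i j * f i j) = - S2 N (fun i j => F i j * Dy N h f i j).
Proof.
  intros HN.
  rewrite (S2_ext N _ (fun i j => / h * (F i j * f i j) + (- / h) * (F i (prv N j) * f i j)))
    by (intros; unfold dy, Rdiv; ring).
  rewrite (S2_ext N (fun i j => F i j * Dy N h f i j) (fun i j => / h * (F i j * f i (nxt N j)) + (- / h) * (F i j * f i j)))
    by (intros; unfold Dy, Rdiv; ring).
  rewrite !S2_add, !S2_scal.
  rewrite <- (S2_nxt_y N (fun i j => F i (prv N j) * f i j)) by auto.
  rewrite (S2_ext N (fun i j => F i (prv N (nxt N j)) * f i (nxt N j)) (fun i j => F i j * f i (nxt N j)))
    by (intros; rewrite prv_nxt; auto).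
  ring.
Qed.

Lemma quad_cs A P Bq : 0 <= A -> 0 <= Bq -> (forall t, 0 <= t * t * A + 2 * t * P + Bq) -> P * P <= A * Bq.
Proof.
  intros HA HB H.
  destruct (Req_dec A 0) as [H0|H0].
  - subst A. destruct (Req_dec P 0) as [->|HP]; [lra|].
    specialize (H (- (Bq + 1) / (2 * P))).
    replace (- (Bq + 1) / (2 * P) * (- (Bq + 1) / (2 * P)) * 0 + 2 * (- (Bq + 1) / (2 * P)) * P + Bq) with (-1) in H by (field; auto). lra.
  - specialize (H (- P / A)).
    replace (- P / A * (- P / A) * A + 2 * (- P / A) * P + Bq) with (Bq - P * P / A) in H by (field; auto).
    assert (0 < A) by lra.
    assert (P * P / A <= Bq) by lra.
    apply Rmult_le_reg_r with (/ A). apply Rinv_0_lt_compat; lra.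
    replace (A * Bq * / A) with Bq by (field; auto). unfold Rdiv in *. lra.
Qed.

Lemma sumN_nonneg n f : (forall k, (k < n)%nat -> 0 <= f k) -> 0 <= sumN n f.
Proof. induction n; intros H; simpl; [lra|]. assert (0 <= sumN n f) by (apply IHn; intros; apply H; lia). assert (0 <= f n) by (apply H; lia). lra. Qed.
Lemma S2_nonneg N u : (forall i j, (i < N)%nat -> (j < N)%nat -> 0 <= u i j) -> 0 <= S2 N u.
Proof. intros H. unfold S2. apply sumN_nonneg; intros. apply sumN_nonneg; intros. auto. Qed.
Lemma S2_sq_nonneg N u : 0 <= S2 N (fun i j => u i j * u i j).
Proof. apply S2_nonneg; intros. apply Rle_0_sqr. Qed.

Lemma S2_quad N t a b : S2 N (fun i j => (t * a i j + b i j) * (t * a i j + b i j))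
  = t * t * S2 N (fun i j => a i j * a i j) + 2 * t * S2 N (fun i j => a i j * b i j) + S2 N (fun i j => b i j * b i j).
Proof.
  rewrite (S2_ext N _ (fun i j => (t * t * (a i j * a i j) + 2 * t * (a i j * b i j)) + b i j * b i j)) by (intros; ring).
  rewrite !S2_add, !S2_scal. ring.
Qed.

Lemma cs2 N a1 a2 b1 b2 :
  let P := S2 N (fun i j => a1 i j * b1 i j) + S2 N (fun i j => a2 i j * b2 i j) in
  P * P <= (S2 N (fun i j => a1 i j * a1 i j) + S2 N (fun i j => a2 i j * a2 i j)) *
           (S2 N (fun i j => b1 i j * b1 i j) + S2 N (fun i j => b2 i j * b2 i j)).
Proof.
  intros P. apply quad_cs.
  - pose proof (S2_sq_nonneg N a1); pose proof (S2_sq_nonneg N a2); lra.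
  - pose proof (S2_sq_nonneg N b1); pose proof (S2_sq_nonneg N b2); lra.
  - intros t. pose proof (S2_sq_nonneg N (fun i j => t * a1 i j + b1 i j)).
    pose proof (S2_sq_nonneg N (fun i j => t * a2 i j + b2 i j)).
    cbv beta in H, H0. rewrite S2_quad in H, H0. unfold P. lra.
Qed.

Lemma div_le_m x q m : 0 <= x -> 0 < m -> m <= q -> x / q <= x / m.
Proof. intros. unfold Rdiv. apply Rmult_le_compat_l; auto. apply Rinv_le_contravar; auto. Qed.

Lemma Rabs_divpos x q : 0 < q -> Rabs (x / q) = Rabs x / q.
Proof. intros. unfold Rdiv. rewrite Rabs_mult, Rabs_inv, (Rabs_pos_eq q) by lra. auto. Qed.

Lemma wdiff a b qe qn mp K : 0 < mp -> mp <= qe -> mp <= qn -> Rabs b <= K ->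
  Rabs (a / qe - b / qn) <= Rabs (a - b) / mp + K * Rabs (qe - qn) / (mp * mp).
Proof.
  intros Hm He Hn Hb.
  replace (a / qe - b / qn) with ((a - b) / qe + (b * (qn - qe)) / (qe * qn)) by (field; lra).
  eapply Rle_trans; [apply Rabs_triang|].
  rewrite !Rabs_divpos by nra. rewrite Rabs_mult.
  apply Rplus_le_compat.
  - apply div_le_m; auto. apply Rabs_pos.
  - replace (Rabs (qn - qe)) with (Rabs (qe - qn)) by (rewrite <- Rabs_Ropp; f_equal; ring).
    apply Rle_trans with (Rabs b * Rabs (qe - qn) / (mp * mp)).
    + apply div_le_m. apply Rmult_le_pos; apply Rabs_pos. nra. nra.
    + unfold Rdiv. apply Rmult_le_compat_r. left; apply Rinv_0_lt_compat; nra.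
      apply Rmult_le_compat_r. apply Rabs_pos. auto.
Qed.

Definition K1 Bb Ct := Bb + 1 + Ct.
Definition K2 Bb mp := Bb / mp.
Definition c1 Bb mp Ct := 3 * (K1 Bb Ct * K1 Bb Ct) / (2 * (mp * mp)).
Definition c2 Bb mp Ct := 3 * (K1 Bb Ct * K1 Bb Ct) * ((Bb + 1) * (Bb + 1)) / (2 * (mp * mp * (mp * mp))).
Definition c3 Bb mp := 3 * (K2 Bb mp * K2 Bb mp).

Lemma sq3 x y z : (x + y + z) * (x + y + z) <= 3 * (x * x + y * y + z * z).
Proof. pose proof (Rle_0_sqr (x - y)); pose proof (Rle_0_sqr (y - z)); pose proof (Rle_0_sqr (x - z)). unfold Rsqr in *. nra. Qed.

Lemma sq_abs x : x * x = Rabs x * Rabs x.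
Proof. rewrite <- Rabs_mult. symmetry. apply Rabs_pos_eq. apply Rle_0_sqr. Qed.

Lemma sq_le x U : Rabs x <= U -> x * x <= U * U.
Proof. intros H. assert (x * x = Rabs x * Rabs x) by (rewrite <- Rabs_mult; symmetry; apply Rabs_pos_eq; nra).
  rewrite H0. pose proof (Rabs_pos x). apply Rmult_le_compat; lra. Qed.

Lemma pw (h mp Bb Ct a a' b b' pe pe' pn pn' z z' : R) :
 0 < h -> 0 < mp -> 0 <= Bb -> 0 <= pe -> 0 <= pe' -> 0 <= pn -> 0 <= pn' -> mp <= z -> mp <= z' ->
 Rabs a <= Bb -> Rabs a' <= Bb -> Rabs b <= Bb + 1 -> Rabs b' <= Bb + 1 ->
 Rabs ((pn' - pn) / h) <= Bb + 1 -> Rabs ((z' - z) / h) <= Ct ->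
 let X := (a / (pe + z) + a' / (pe' + z')) / 2 * (((pe' + z') - (pe + z)) / h)
        - (b / (pn + z) + b' / (pn' + z')) / 2 * (((pn' + z') - (pn + z)) / h) in
 X * X <= c1 Bb mp Ct * ((a - b) * (a - b) + (a' - b') * (a' - b'))
        + c2 Bb mp Ct * ((pe - pn) * (pe - pn) + (pe' - pn') * (pe' - pn'))
        + c3 Bb mp * ((((pe' - pn') - (pe - pn)) / h) * (((pe' - pn') - (pe - pn)) / h)).
Proof.
  intros Hh Hm HB Hpe Hpe' Hpn Hpn' Hz Hz' Ha Ha' Hb Hb' Hdn Hdz X.
  set (w := a / (pe + z) - b / (pn + z)).
  set (w' := a' / (pe' + z') - b' / (pn' + z')).
  set (Dqn := ((pn' + z') - (pn + z)) / h).
  set (Dep := ((pe' - pn') - (pe - pn)) / h).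
  assert (HX : X = (w + w') / 2 * Dqn + (a / (pe + z) + a' / (pe' + z')) / 2 * Dep).
  { unfold X, w, w', Dqn, Dep. field. repeat split; lra. }
  set (r := Rabs (a - b) / mp + (Bb + 1) * Rabs (pe - pn) / (mp * mp)).
  set (r' := Rabs (a' - b') / mp + (Bb + 1) * Rabs (pe' - pn') / (mp * mp)).
  assert (Hw : Rabs w <= r).
  { unfold w, r. replace (pe - pn) with ((pe + z) - (pn + z)) by ring. apply wdiff; lra. }
  assert (Hw' : Rabs w' <= r').
  { unfold w', r'. replace (pe' - pn') with ((pe' + z') - (pn' + z')) by ring. apply wdiff; lra. }
  assert (HDq : Rabs Dqn <= K1 Bb Ct).
  { unfold Dqn, K1. replace (((pn' + z') - (pn + z)) / h) with ((pn' - pn) / h + (z' - z) / h) by (field; lra).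
    eapply Rle_trans; [apply Rabs_triang|]. lra. }
  assert (Hwe : Rabs ((a / (pe + z) + a' / (pe' + z')) / 2) <= K2 Bb mp).
  { rewrite Rabs_divpos by lra. 
    assert (Rabs (a / (pe + z)) <= Bb / mp).
    { rewrite Rabs_divpos by lra. apply Rle_trans with (Rabs a / mp). apply div_le_m; try lra. apply Rabs_pos.
      unfold Rdiv; apply Rmult_le_compat_r; auto. left; apply Rinv_0_lt_compat; lra. }
    assert (Rabs (a' / (pe' + z')) <= Bb / mp).
    { rewrite Rabs_divpos by lra. apply Rle_trans with (Rabs a' / mp). apply div_le_m; try lra. apply Rabs_pos.
      unfold Rdiv; apply Rmult_le_compat_r; auto. left; apply Rinv_0_lt_compat; lra. }
    pose proof (Rabs_triang (a / (pe + z)) (a' / (pe' + z'))). unfold K2. lra. }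
  assert (HXa : Rabs X <= K1 Bb Ct * (r / 2) + K1 Bb Ct * (r' / 2) + K2 Bb mp * Rabs Dep).
  { rewrite HX. eapply Rle_trans; [apply Rabs_triang|]. rewrite !Rabs_mult.
    assert (Rabs ((w + w') / 2) <= r / 2 + r' / 2).
    { rewrite Rabs_divpos by lra. pose proof (Rabs_triang w w'). lra. }
    assert (0 <= K1 Bb Ct) by (unfold K1; pose proof (Rabs_pos ((z' - z) / h)); lra).
    apply Rplus_le_compat.
    - apply Rle_trans with ((r / 2 + r' / 2) * K1 Bb Ct); [|lra].
      apply Rmult_le_compat; auto; apply Rabs_pos.
    - apply Rmult_le_compat_r; auto. apply Rabs_pos. }
  assert (HX2 : X * X <= 3 * ((K1 Bb Ct * (r / 2)) * (K1 Bb Ct * (r / 2)) + (K1 Bb Ct * (r' / 2)) * (K1 Bb Ct * (r' / 2)) + (K2 Bb mp * Rabs Dep) * (K2 Bb mp * Rabs Dep))).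
  { eapply Rle_trans; [|apply sq3]. apply sq_le. auto. }
  assert (Hr2 : r * r <= 2 * ((a - b) * (a - b) / (mp * mp) + (Bb + 1) * (Bb + 1) * ((pe - pn) * (pe - pn)) / (mp * mp * (mp * mp)))).
  { unfold r. 
    replace ((a - b) * (a - b)) with (Rabs (a - b) * Rabs (a - b)) by (first [apply sq_abs | symmetry; apply sq_abs]).
    replace ((pe - pn) * (pe - pn)) with (Rabs (pe - pn) * Rabs (pe - pn)) by (first [apply sq_abs | symmetry; apply sq_abs]).
    set (u := Rabs (a - b) / mp). set (v := (Bb + 1) * Rabs (pe - pn) / (mp * mp)).
    replace (Rabs (a - b) * Rabs (a - b) / (mp * mp)) with (u * u) by (unfold u; field; lra).
    replace ((Bb + 1) * (Bb + 1) * (Rabs (pe - pn) * Rabs (pe - pn)) / (mp * mp * (mp * mp))) with (v * v) by (unfold v; field; lra).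
    pose proof (Rle_0_sqr (u - v)). unfold Rsqr in *. nra. }
  assert (Hr2' : r' * r' <= 2 * ((a' - b') * (a' - b') / (mp * mp) + (Bb + 1) * (Bb + 1) * ((pe' - pn') * (pe' - pn')) / (mp * mp * (mp * mp)))).
  { unfold r'. 
    replace ((a' - b') * (a' - b')) with (Rabs (a' - b') * Rabs (a' - b')) by (first [apply sq_abs | symmetry; apply sq_abs]).
    replace ((pe' - pn') * (pe' - pn')) with (Rabs (pe' - pn') * Rabs (pe' - pn')) by (first [apply sq_abs | symmetry; apply sq_abs]).
    set (u := Rabs (a' - b') / mp). set (v := (Bb + 1) * Rabs (pe' - pn') / (mp * mp)).
    replace (Rabs (a' - b') * Rabs (a' - b') / (mp * mp)) with (u * u) by (unfold u; field; lra).
    replace ((Bb + 1) * (Bb + 1) * (Rabs (pe' - pn') * Rabs (pe' - pn')) / (mp * mp * (mp * mp))) with (v * v) by (unfold v; field; lra).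
    pose proof (Rle_0_sqr (u - v)). unfold Rsqr in *. nra. }
  eapply Rle_trans; [apply HX2|].
  set (k1 := K1 Bb Ct) in *. set (k2 := K2 Bb mp) in *.
  set (E := (a - b) * (a - b)) in *. set (E' := (a' - b') * (a' - b')) in *.
  set (P := (pe - pn) * (pe - pn)) in *. set (P' := (pe' - pn') * (pe' - pn')) in *.
  assert (Eq1 : 3 * (k1 * (r / 2) * (k1 * (r / 2)) + k1 * (r' / 2) * (k1 * (r' / 2)) + k2 * Rabs Dep * (k2 * Rabs Dep))
     = 3 / 4 * (k1 * k1) * (r * r) + 3 / 4 * (k1 * k1) * (r' * r') + 3 * (k2 * k2) * (Dep * Dep))
    by (rewrite (sq_abs Dep); field).
  assert (Eq2 : c1 Bb mp Ct * (E + E') + c2 Bb mp Ct * (P + P') + c3 Bb mp * (Dep * Dep)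
     = 3 / 4 * (k1 * k1) * (2 * (E / (mp * mp) + (Bb + 1) * (Bb + 1) * P / (mp * mp * (mp * mp))))
     + 3 / 4 * (k1 * k1) * (2 * (E' / (mp * mp) + (Bb + 1) * (Bb + 1) * P' / (mp * mp * (mp * mp))))
     + 3 * (k2 * k2) * (Dep * Dep))
    by (unfold c1, c2, c3; fold k1 k2; field; lra).
  rewrite Eq1, Eq2.
  assert (0 <= k1 * k1) by apply Rle_0_sqr.
  apply Rplus_le_compat; [apply Rplus_le_compat|]; try lra; apply Rmult_le_compat_l; lra.
Qed.

Definition Mc Bb mp Ct := 4 * c1 Bb mp Ct + 4 * c2 Bb mp Ct + c3 Bb mp.

Section Main.
Variables (N : nat) (h mp Bb Ct : R) (p0h phie pe phn pnm f : gf).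
Hypothesis HN : (1 <= N)%nat.
Hypothesis Hh : 0 < h.
Hypothesis Hmp : 0 < mp.
Hypothesis HB : 0 <= Bb.
Hypothesis Hg : forall i j, (i < N)%nat -> (j < N)%nat ->
  0 <= pe i j /\ 0 <= pnm i j /\ mp <= p0h i j /\ Rabs (phie i j) <= Bb /\ Rabs (phn i j) <= Bb + 1 /\
  Rabs (Dx N h pnm i j) <= Bb + 1 /\ Rabs (Dy N h pnm i j) <= Bb + 1 /\
  Rabs (Dx N h p0h i j) <= Ct /\ Rabs (Dy N h p0h i j) <= Ct.

Let qe := gadd pe p0h.
Let qn := gadd pnm p0h.
Let we := fun i j => phie i j / qe i j.
Let wn := fun i j => phn i j / qn i j.
Let Gx := gsub (fluxx N h we qe) (fluxx N h wn qn).
Let Gy := gsub (fluxy N h we qe) (fluxy N h wn qn).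
Let eph := gsub phie phn.
Let ep := gsub pe pnm.
Let E := fun i j => eph i j * eph i j.
Let P := fun i j => ep i j * ep i j.
Let DX := fun i j => Dx N h ep i j * Dx N h ep i j.
Let DY := fun i j => Dy N h ep i j * Dy N h ep i j.

Lemma pwx i j : (i < N)%nat -> (j < N)%nat ->
  Gx i j * Gx i j <= c1 Bb mp Ct * (E i j + E (nxt N i) j) + c2 Bb mp Ct * (P i j + P (nxt N i) j) + c3 Bb mp * DX i j.
Proof.
  intros Hi Hj. pose proof (nxt_lt N i HN) as Hi'.
  destruct (Hg i j Hi Hj) as (H1 & H2 & H3 & H4 & H5 & H6 & H7 & H8 & H9).
  destruct (Hg (nxt N i) j Hi' Hj) as (H1' & H2' & H3' & H4' & H5' & _).
  unfold Gx, E, P, DX, eph, ep, gsub, fluxx, avgx, Dx, we, wn, qe, qn, gadd.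
  unfold Dx in H6, H8.
  apply pw; auto.
Qed.

Lemma pwy i j : (i < N)%nat -> (j < N)%nat ->
  Gy i j * Gy i j <= c1 Bb mp Ct * (E i j + E i (nxt N j)) + c2 Bb mp Ct * (P i j + P i (nxt N j)) + c3 Bb mp * DY i j.
Proof.
  intros Hi Hj. pose proof (nxt_lt N j HN) as Hj'.
  destruct (Hg i j Hi Hj) as (H1 & H2 & H3 & H4 & H5 & H6 & H7 & H8 & H9).
  destruct (Hg i (nxt N j) Hi Hj') as (H1' & H2' & H3' & H4' & H5' & _).
  unfold Gy, E, P, DY, eph, ep, gsub, fluxy, avgy, Dy, we, wn, qe, qn, gadd.
  unfold Dy in H7, H9.
  apply pw; auto.
Qed.

Lemma c_nonneg : 0 <= c1 Bb mp Ct /\ 0 <= c2 Bb mp Ct /\ 0 <= c3 Bb mp.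
Proof.
  unfold c1, c2, c3. pose proof (Rle_0_sqr (K1 Bb Ct)). pose proof (Rle_0_sqr (K2 Bb mp)).
  pose proof (Rle_0_sqr (Bb + 1)). unfold Rsqr in *.
  assert (0 < mp * mp) by nra.
  repeat split.
  - apply Rmult_le_pos; [lra|]. left; apply Rinv_0_lt_compat; lra.
  - apply Rmult_le_pos; [nra|]. left; apply Rinv_0_lt_compat; nra.
  - lra.
Qed.

Lemma sumx : S2 N (fun i j => Gx i j * Gx i j) <=
  2 * c1 Bb mp Ct * S2 N E + 2 * c2 Bb mp Ct * S2 N P + c3 Bb mp * S2 N DX.
Proof.
  eapply Rle_trans; [apply S2_le; intros; apply pwx; auto|].
  rewrite !S2_add, !S2_scal, !S2_add, (S2_nxt_x N E), (S2_nxt_x N P) by auto.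
  right; ring.
Qed.

Lemma sumy : S2 N (fun i j => Gy i j * Gy i j) <=
  2 * c1 Bb mp Ct * S2 N E + 2 * c2 Bb mp Ct * S2 N P + c3 Bb mp * S2 N DY.
Proof.
  eapply Rle_trans; [apply S2_le; intros; apply pwy; auto|].
  rewrite !S2_add, !S2_scal, !S2_add, (S2_nxt_y N E), (S2_nxt_y N P) by auto.
  right; ring.
Qed.

Lemma inner_eq : inner N h (T1 N h p0h phie pe phn pnm) f =
  - (h ^ 2 * (S2 N (fun i j => Gx i j * Dx N h f i j) + S2 N (fun i j => Gy i j * Dy N h f i j))).
Proof.
  transitivity (h ^ 2 * S2 N (fun i j => T1 N h p0h phie pe phn pnm i j * f i j)); [reflexivity|].
  rewrite (S2_ext N _ (fun i j => dx N h Gx i j * f i j + dy N h Gy i j * f i j))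
    by (intros; unfold T1, divh; cbv zeta; apply Rmult_plus_distr_r).
  rewrite S2_add, sbp_x, sbp_y by auto. ring.
Qed.

Lemma final_num y M s c : 0 <= M -> 0 <= s -> 0 <= c -> y * y <= M * (s * s) * c ->
  Rabs y <= sqrt M * s * sqrt c.
Proof.
  intros HM Hs Hc H. rewrite <- sqrt_Rsqr_abs. unfold Rsqr.
  rewrite <- (sqrt_square s) by auto. rewrite <- !sqrt_mult_alt by (try apply Rmult_le_pos; auto; nra).
  apply sqrt_le_1_alt. auto.
Qed.

Lemma main_est : Rabs (inner N h (T1 N h p0h phie pe phn pnm) f) <=
  sqrt (Mc Bb mp Ct) * (nL2 N h eph + nH1 N h ep) * ngradL2 N h f.
Proof.
  rewrite inner_eq.
  set (Sx := S2 N (fun i j => Gx i j * Dx N h f i j)).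
  set (Sy := S2 N (fun i j => Gy i j * Dy N h f i j)).
  pose proof (cs2 N Gx Gy (Dx N h f) (Dy N h f)) as Hcs. cbv zeta in Hcs. fold Sx Sy in Hcs.
  pose proof sumx as Hx. pose proof sumy as Hy. destruct c_nonneg as (Hc1 & Hc2 & Hc3).
  set (A1 := S2 N (fun i j => Gx i j * Gx i j)) in *.
  set (A2 := S2 N (fun i j => Gy i j * Gy i j)) in *.
  set (B1 := S2 N (fun i j => Dx N h f i j * Dx N h f i j)) in *.
  set (B2 := S2 N (fun i j => Dy N h f i j * Dy N h f i j)) in *.
  assert (HE : 0 <= S2 N E) by apply S2_sq_nonneg.
  assert (HP : 0 <= S2 N P) by apply S2_sq_nonneg.
  assert (HDX : 0 <= S2 N DX) by apply S2_sq_nonneg.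
  assert (HDY : 0 <= S2 N DY) by apply S2_sq_nonneg.
  assert (HB1 : 0 <= B1) by apply S2_sq_nonneg.
  assert (HB2 : 0 <= B2) by apply S2_sq_nonneg.
  set (M := Mc Bb mp Ct).
  assert (HM : 0 <= M) by (unfold M, Mc; lra).
  set (Q := S2 N E + S2 N P + S2 N DX + S2 N DY).
  assert (HA : A1 + A2 <= M * Q).
  { unfold M, Mc, Q.
    assert (4 * c1 Bb mp Ct * S2 N E <= (4 * c1 Bb mp Ct + 4 * c2 Bb mp Ct + c3 Bb mp) * S2 N E) by (apply Rmult_le_compat_r; lra).
    assert (4 * c2 Bb mp Ct * S2 N P <= (4 * c1 Bb mp Ct + 4 * c2 Bb mp Ct + c3 Bb mp) * S2 N P) by (apply Rmult_le_compat_r; lra).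
    assert (c3 Bb mp * S2 N DX <= (4 * c1 Bb mp Ct + 4 * c2 Bb mp Ct + c3 Bb mp) * S2 N DX) by (apply Rmult_le_compat_r; lra).
    assert (c3 Bb mp * S2 N DY <= (4 * c1 Bb mp Ct + 4 * c2 Bb mp Ct + c3 Bb mp) * S2 N DY) by (apply Rmult_le_compat_r; lra).
    lra. }
  set (a := h ^ 2 * S2 N E).
  set (b := h ^ 2 * S2 N P + h ^ 2 * S2 N DX + h ^ 2 * S2 N DY).
  set (c := h ^ 2 * B1 + h ^ 2 * B2).
  assert (Ha : nL2 N h eph = sqrt a) by reflexivity.
  assert (Hb : nH1 N h ep = sqrt b) by reflexivity.
  assert (Hc : ngradL2 N h f = sqrt c) by reflexivity.
  rewrite Ha, Hb, Hc.
  assert (Hh2 : 0 < h ^ 2) by (apply pow_lt; auto).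
  assert (0 <= a) by (unfold a; apply Rmult_le_pos; lra).
  assert (0 <= b) by (unfold b; pose proof (Rmult_le_pos _ _ (Rlt_le _ _ Hh2) HP); pose proof (Rmult_le_pos _ _ (Rlt_le _ _ Hh2) HDX); pose proof (Rmult_le_pos _ _ (Rlt_le _ _ Hh2) HDY); lra).
  assert (0 <= c) by (unfold c; pose proof (Rmult_le_pos _ _ (Rlt_le _ _ Hh2) HB1); pose proof (Rmult_le_pos _ _ (Rlt_le _ _ Hh2) HB2); lra).
  apply final_num; auto.
  - pose proof (sqrt_pos a); pose proof (sqrt_pos b); lra.
  - set (s := sqrt a + sqrt b).
    assert (Hs : a + b <= s * s).
    { unfold s. pose proof (sqrt_sqrt a H). pose proof (sqrt_sqrt b H0).
      pose proof (sqrt_pos a); pose proof (sqrt_pos b). nra. }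
    assert (Hab : a + b = h ^ 2 * Q) by (unfold a, b, Q; ring).
    assert (Hcc : c = h ^ 2 * (B1 + B2)) by (unfold c; ring).
    assert (Hprod : (Sx + Sy) * (Sx + Sy) <= M * Q * (B1 + B2)).
    { eapply Rle_trans; [apply Hcs|]. apply Rmult_le_compat_r; lra. }
    replace (- (h ^ 2 * (Sx + Sy)) * - (h ^ 2 * (Sx + Sy))) with (h ^ 2 * h ^ 2 * ((Sx + Sy) * (Sx + Sy))) by ring.
    apply Rle_trans with (h ^ 2 * h ^ 2 * (M * Q * (B1 + B2))).
    + apply Rmult_le_compat_l; auto. nra.
    + replace (h ^ 2 * h ^ 2 * (M * Q * (B1 + B2))) with (M * (a + b) * c) by (rewrite Hab, Hcc; ring).
      apply Rmult_le_compat_r; auto. apply Rmult_le_compat_l; auto.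
Qed.

End Main.

Lemma maxN_nonneg n f : 0 <= maxN n f.
Proof. induction n; simpl; [lra|]. eapply Rle_trans; [apply IHn|apply Rmax_l]. Qed.
Lemma maxN_ge n f k : (k < n)%nat -> f k <= maxN n f.
Proof.
  induction n; intros Hk; [lia|]. simpl.
  destruct (Nat.eq_dec k n) as [->|Hne]; [apply Rmax_r|].
  eapply Rle_trans; [apply IHn; lia|apply Rmax_l].
Qed.
Lemma nLinf_ge N u i j : (i < N)%nat -> (j < N)%nat -> Rabs (u i j) <= nLinf N u.
Proof.
  intros Hi Hj. unfold nLinf.
  eapply Rle_trans; [|apply (maxN_ge N (fun i => maxN N (fun j => Rabs (u i j))) i Hi)].
  apply (maxN_ge N (fun j => Rabs (u i j)) j Hj).
Qed.
Lemma nLinf_nonneg N u : 0 <= nLinf N u.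
Proof. apply maxN_nonneg. Qed.
Lemma ngradLinf_nonneg N h u : 0 <= ngradLinf N h u.
Proof. unfold ngradLinf. eapply Rle_trans; [apply nLinf_nonneg|apply Rmax_l]. Qed.
Lemma Dx_le N h u i j : (i < N)%nat -> (j < N)%nat -> Rabs (Dx N h u i j) <= ngradLinf N h u.
Proof. intros. unfold ngradLinf. eapply Rle_trans; [apply nLinf_ge; eauto|apply Rmax_l]. Qed.
Lemma Dy_le N h u i j : (i < N)%nat -> (j < N)%nat -> Rabs (Dy N h u i j) <= ngradLinf N h u.
Proof. intros. unfold ngradLinf. eapply Rle_trans; [apply nLinf_ge; eauto|apply Rmax_r]. Qed.

Lemma m_range m tau T : 0 < tau -> INR m * tau <= T -> (m < S (Z.to_nat (Int_part (T / tau))))%nat.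
Proof.
  intros Ht Hm.
  assert (H1 : INR m <= T / tau).
  { apply Rmult_le_reg_r with tau; auto. unfold Rdiv. rewrite Rmult_assoc, Rinv_l by lra. lra. }
  assert (H2 : (Z.of_nat m <= Int_part (T / tau))%Z).
  { destruct (Z.le_gt_cases (Z.of_nat m) (Int_part (T / tau))) as [|Hgt]; auto.
    exfalso. assert (Hle : (Int_part (T / tau) + 1 <= Z.of_nat m)%Z) by lia.
    apply IZR_le in Hle. rewrite plus_IZR, <- INR_IZR_INZ in Hle.
    destruct (base_Int_part (T / tau)). lra. }
  lia.
Qed.

Theorem lemma3p4 :
  forall (B mp Ct : R), 0 < mp -> 0 < Ct ->
  exists C : R,
  forall (D eta T L tau Mp : R) (N : nat) (p0 : R -> R -> R)
         (phi p : R -> R -> R -> R) (phin pn : nat -> gf),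
  0 < D -> 0 < eta -> 0 < T -> 0 < L -> (1 <= N)%nat -> 0 < tau ->
  p0_ok L mp Mp p0 ->
  crime_solution D eta T L p0 phi p ->
  let h := L / INR N in
  let phih := fun t => restr h (fun x y => phi x y t) in
  let ph := fun t => restr h (fun x y => p x y t) in
  spimex N h D eta tau (restr h p0) (phih 0) (ph 0) phin pn ->
  ngradLinf N h (restr h p0) <= Ct ->
  B = Bconst N h T tau phi p ->
  forall m : nat, INR m * tau <= T ->
  nLinf N (phin m) + nLinf N (pn m) + ngradLinf N h (pn m) <= B + 1 ->
  forall f : gf,
    Rabs (inner N h (T1 N h (restr h p0) (phih (INR m * tau)) (ph (INR m * tau))
                         (phin m) (pn m)) f)
    <= C * (nL2 N h (gsub (phih (INR m * tau)) (phin m))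
            + nH1 N h (gsub (ph (INR m * tau)) (pn m))) * ngradL2 N h f.
Proof.
  intros B mp Ct Hmp HCt. exists (sqrt (Mc (Rabs B) mp Ct)).
  intros D eta T L tau Mp N p0 phi p phin pn HD Heta HT HL HN Htau Hp0 Hsol h phih ph Hsp Hct HBeq m Hm Hbd f.
  assert (HB0 : 0 <= B) by (rewrite HBeq; apply maxN_nonneg).
  rewrite (Rabs_pos_eq B HB0).
  assert (Hh : 0 < h).
  { unfold h. apply Rdiv_lt_0_compat; auto. apply lt_0_INR. lia. }
  set (t := INR m * tau) in *.
  assert (Ht0 : 0 <= t) by (unfold t; apply Rmult_le_pos; [apply pos_INR|lra]).
  assert (Hphie : nLinf N (phih t) <= B).
  { rewrite HBeq. unfold Bconst.
    eapply Rle_trans; [|apply (maxN_ge _ _ m (m_range m tau T Htau Hm))]. cbv beta zeta. fold t.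
    pose proof (nLinf_nonneg N (restr h (fun x y => p x y t))).
    pose proof (maxN_nonneg N (fun i => maxN N (fun j =>
      sqrt ((Derive (fun x => p x (INR j * h) t) (INR i * h)) ^ 2 +
          (Derive (fun y => p (INR i * h) y t) (INR j * h)) ^ 2)))).
    unfold gradLinf_cont. unfold phih. lra. }
  pose proof (nLinf_nonneg N (phin m)). pose proof (nLinf_nonneg N (pn m)). pose proof (ngradLinf_nonneg N h (pn m)).
  destruct Hp0 as (_ & _ & Hp0b & _).
  destruct Hsol as (_ & Hsolnn & _).
  apply main_est; auto.
  intros i j Hi Hj.
  repeat split.
  - unfold ph, restr. apply (Hsolnn _ _ t). lra.
  - destruct m as [|k].
    + destruct Hsp as (Hinit & _). destruct (Hinit i j Hi Hj) as (_ & ->).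
      unfold ph, restr. apply (Hsolnn _ _ 0). lra.
    + destruct Hsp as (_ & Hst). destruct (Hst k) as (phit & pt & _ & Hnn & _).
      apply (Hnn i j Hi Hj).
  - unfold restr. apply Hp0b.
  - eapply Rle_trans; [apply nLinf_ge; eauto|auto].
  - eapply Rle_trans; [apply nLinf_ge; eauto|lra].
  - eapply Rle_trans; [apply Dx_le; eauto|lra].
  - eapply Rle_trans; [apply Dy_le; eauto|lra].
  - eapply Rle_trans; [apply Dx_le; eauto|lra].
  - eapply Rle_trans; [apply Dy_le; eauto|lra].
Qed.
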